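(* Let $\mu$ be the local limit of a locally convergent sequence of finite graphs, and let $\mathcal E$ be a local event on rooted graphs. Then for every $\delta>0$, $r\in\mathbb N$ and $p\in[0,1]$ there is a constant $D\in\mathbb N$ (depending on $\delta$ and $r$) such that $$\Pr\big(\exists u\in\mathcal N_r(o;G)\text{ with }\mathcal E(G(p),u)\big)\le D\,\Pr\big(\mathcal E(G(p),o)\big)+\delta,$$ where probabilities are over $(G,o)\sim\mu$ and the independent percolation.
   Context: $\mathcal N_r(v;G)$ is the subgraph induced by vertices within graph distance $r$ of $v$. A local event $\mathcal E$ is a set of rooted graphs such that whether $(G,u)\in\mathcal E$ (written $\mathcal E(G,u)$) is determined by the isomorphism class of $\mathcal N_R(u;G)$ rooted at $u$, for some fixed $R$. $G(p)$: independent bond percolation with retention probability $p$. Local convergence: $\mathcal G^*$ is the space of rooted locally finite graphs modulo root-preserving isomorphism with the local metric; $G_n$ ($n$ vertices) converges locally to a probability measure $\mu$ on $\mathcal G^*$ if $\frac1n\sum_v f(G_n,v)\to\mathbb E_\mu[f]$ in probability for all bounded continuous $f$ (such limits are unimodular). *)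

(* Defs.v *)
From HB Require Import structures.
From mathcomp Require Import all_boot all_order all_algebra.
From mathcomp Require Import all_classical all_reals all_analysis.
Set Implicit Arguments. Unset Strict Implicit. Unset Printing Implicit Defensive.
Import Order.TTheory GRing.Theory Num.Theory.
Import numFieldNormedType.Exports.
Local Open Scope classical_set_scope.
Local Open Scope ring_scope.

(* The (simple, undirected) adjacency of G is
     adj G i j  <=>  i <> j  and  G.1 (min i j) (max i j),
   so only the entries G.1 i j with i < j are meaningful.  Vertices not in
   the component of the root are irrelevant for everything below (local
   notions only see the root's component).                              *)
Definition RGraph : Type := ((nat -> nat -> bool) * nat)%type.

Definition groot (G : RGraph) : nat := G.2.
Definition adj (G : RGraph) (i j : nat) : bool :=
  (i != j) && G.1 (minn i j) (maxn i j).
Definition reroot (G : RGraph) (u : nat) : RGraph := (G.1, u).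

Fixpoint inball (G : RGraph) (r : nat) (v : nat) : Prop :=
  match r with
  | 0 => v = groot G
  | r'.+1 => inball G r' v \/ exists w, inball G r' w /\ adj G w v
  end.

Definition ball_iso (r : nat) (G H : RGraph) : Prop :=
  exists phi psi : nat -> nat,
    [/\ phi (groot G) = groot H,
        (forall v, inball G r v -> inball H r (phi v) /\ psi (phi v) = v),
        (forall w, inball H r w -> inball G r (psi w) /\ phi (psi w) = w) &
        (forall v w, inball G r v -> inball G r w ->
           adj H (phi v) (phi w) = adj G v w)].

Definition locally_finite (G : RGraph) : Prop :=
  forall v, exists n, forall w, adj G v w -> (w < n)%N.

Definition local_event (E : RGraph -> Prop) : Prop :=
  exists R : nat, forall G H, ball_iso R G H -> (E G <-> E H).

(* Measurable structure: the sigma-algebra generated by the cylinder sets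
   {G | G.1 i j = b} and {G | root = k} (the product sigma-algebra). *)
Definition cylinders : set (set RGraph) :=
  [set A | (exists i j b, A = [set G : RGraph | G.1 i j = b]) \/
           (exists k, A = [set G : RGraph | G.2 = k])].

Definition RGraphM := g_sigma_algebraType cylinders.

(* bounded, and continuous for the local metric on G* (locally finite
   rooted graphs), written out: for every (G,o) and eps > 0 there is r such
   that every (H,o') whose r-ball is rooted-isomorphic to that of (G,o)
   satisfies |f H - f G| < eps. *)
Definition bounded_local_continuous {R : realType} (f : RGraph -> R) : Prop :=
  (exists M : R, forall G, locally_finite G -> `|f G| <= M) /\
  (forall G, locally_finite G -> forall eps : R, 0 < eps ->
     exists r : nat, forall H, locally_finite H -> ball_iso r G H ->
       `|f H - f G| < eps).

(* The n-th finite graph has vertex set {0,..,n-1}: edges outside are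
   discarded; rooted at v. *)
Definition fin_rgraph (e : nat -> nat -> bool) (n v : nat) : RGraph :=
  (fun i j => [&& (i < n)%N, (j < n)%N & e i j], v).

(* G_n (n vertices, edge indicator Gs n) converges locally to mu:
   mu is a probability measure on (locally finite) rooted graphs, and
   (1/n) sum_v f(G_n, v) --> E_mu[f] for all bounded continuous f. *)
Definition local_limit {R : realType} (Gs : nat -> nat -> nat -> bool)
    (mu : probability RGraphM R) : Prop :=
  mu [set G : RGraphM | locally_finite G] = 1%E /\
  forall f : RGraph -> R, bounded_local_continuous f ->
    (fun n : nat => n%:R^-1 * \sum_(v < n) f (fin_rgraph (Gs n) n v))
      @ \oo --> \int[mu]_x f x.

Definition perc (G : RGraph) (w : nat -> nat -> bool) : RGraph :=
  (fun i j => G.1 i j && w i j, G.2).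

Definition ext_conf (m : nat) (w : {ffun 'I_m * 'I_m -> bool}) :
    nat -> nat -> bool :=
  fun i j => match insub i, insub j with
             | Some i', Some j' => w (i', j')
             | _, _ => false
             end.

(* probability weight of w under independent Bernoulli(p) percolation on
   the edges {i<j} of G inside {0..m-1} (non-edges are always closed) *)
Definition conf_weight {R : realType} (p : R) (G : RGraph) (m : nat)
    (w : {ffun 'I_m * 'I_m -> bool}) : R :=
  \prod_(ij : 'I_m * 'I_m)
     (if ((ij.1 < ij.2)%N && G.1 ij.1 ij.2)
      then (if w ij then p else 1 - p)
      else (if w ij then 0 else 1)).

Definition box_prob {R : realType} (p : R) (G : RGraph)
    (Q : RGraph -> Prop) (m : nat) : R :=
  \sum_(w : {ffun 'I_m * 'I_m -> bool})
     conf_weight p G w * (if `[< Q (perc G (ext_conf w)) >] then 1 else 0).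

(* For an event Q depending only on
   finitely many edges of G (as all events below do, G locally finite),
   box_prob p G Q m is eventually constant in m and equals the exact
   percolation probability; we take the limit. *)
Definition perc_prob {R : realType} (p : R) (G : RGraph)
    (Q : RGraph -> Prop) : R :=
  lim (box_prob p G Q @ \oo).

(* Main.v *)
Require Import Defs.
From HB Require Import structures.
From mathcomp Require Import all_boot all_order all_algebra.
From mathcomp Require Import all_classical all_reals all_analysis.
Import Order.TTheory GRing.Theory Num.Theory.
Import numFieldNormedType.Exports.
Local Open Scope classical_set_scope.
Local Open Scope ring_scope.
From mathcomp Require Import zify.
Set Implicit Arguments. Unset Strict Implicit.
Lemma adj_sym (G : RGraph) a b : adj G a b = adj G b a.
Proof. by rewrite /adj eq_sym minnC maxnC. Qed.

Lemma adj_reroot (G : RGraph) u a b : adj (reroot G u) a b = adj G a b.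
Proof. by []. Qed.

Lemma inball_root (G : RGraph) k : inball G k (groot G).
Proof. by elim: k => [|k IH] //=; left. Qed.

Lemma inball_mono (G : RGraph) k k' v : (k <= k')%N -> inball G k v -> inball G k' v.
Proof.
move=> /subnKC <-; elim: (k' - k)%N => [|d IH]; first by rewrite addn0.
by move=> h; rewrite addnS /=; left; exact: IH.
Qed.

Lemma inball_adj (G : RGraph) k v w : inball G k v -> adj G v w -> inball G k.+1 w.
Proof. by move=> h a; right; exists v. Qed.

Lemma inball_sub (G H : RGraph) k v :
  (forall a b, adj G a b -> adj H a b) -> groot G = groot H ->
  inball G k v -> inball H k v.
Proof.
move=> sub r; elim: k v => [|k IH] v /=; first by rewrite r.
case=> [h|[w [h a]]]; first by left; exact: IH.
by right; exists w; split; [exact: IH|exact: sub].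
Qed.

Lemma inball_trans (G : RGraph) a b u v :
  inball G a u -> inball (reroot G u) b v -> inball G (a + b) v.
Proof.
move=> hu; elim: b v => [|b IH] v /=; first by move=> ->; rewrite addn0.
rewrite addnS /=; case=> [h|[w [h ad]]]; first by left; exact: IH.
by right; exists w; split; [exact: IH|].
Qed.

Lemma inball_sym (G : RGraph) k u v :
  inball (reroot G u) k v -> inball (reroot G v) k u.
Proof.
elim: k v => [|k IH] v /=; first by move=> ->.
case=> [h|[w [h ad]]]; first by left; exact: IH.
have h1 : inball (reroot G v) 1 w by right; exists v; split => //; rewrite adj_sym.
have := inball_trans h1 (IH _ h); by rewrite add1n.
Qed.

Lemma perc_adj (G : RGraph) x a b :
  adj (perc G x) a b = adj G a b && x (minn a b) (maxn a b).
Proof. by rewrite /adj /perc /= andbA. Qed.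

Lemma perc_sub (G : RGraph) x a b : adj (perc G x) a b -> adj G a b.
Proof. by rewrite perc_adj => /andP[]. Qed.

Definition biso (k : nat) (G H : RGraph) (phi psi : nat -> nat) : Prop :=
  [/\ phi (groot G) = groot H,
      (forall v, inball G k v -> inball H k (phi v) /\ psi (phi v) = v),
      (forall w, inball H k w -> inball G k (psi w) /\ phi (psi w) = w) &
      (forall v w, inball G k v -> inball G k w ->
         adj H (phi v) (phi w) = adj G v w)].

Lemma biso_ball k G H : ball_iso k G H <-> exists phi psi, biso k G H phi psi.
Proof. by []. Qed.

Lemma biso_sym k G H phi psi : biso k G H phi psi -> biso k H G psi phi.
Proof.
case=> r f g a; split.
- by rewrite -r; case: (f _ (inball_root G k)).
- exact: g.
- exact: f.
- move=> v w hv hw; have [hv1 hv2] := g _ hv; have [hw1 hw2] := g _ hw.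
  by rewrite -a // hv2 hw2.
Qed.

Lemma biso_refl k G : biso k G G id id.
Proof. by split. Qed.

Lemma transport_ball (G H : RGraph) (X : nat -> Prop) phi k :
  (forall a b, X a -> X b -> adj H (phi a) (phi b) = adj G a b) ->
  (forall v, inball G k v -> X v) -> phi (groot G) = groot H ->
  forall j v, (j <= k)%N -> inball G j v -> inball H j (phi v).
Proof.
move=> ad hX r; elim=> [|j IH] v hj /=; first by move=> ->.
case=> [h|[w [h a]]]; first by left; apply: IH => //; exact: ltnW.
right; exists (phi w); split; first by apply: IH => //; exact: ltnW.
rewrite ad //; apply: hX.
  by apply: (inball_mono (ltnW hj)); exact: h.
by apply: (inball_mono hj); right; exists w.
Qed.

Lemma transport_biso k (G H : RGraph) (X Y : nat -> Prop) phi psi :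
  (forall v, X v -> Y (phi v) /\ psi (phi v) = v) ->
  (forall w, Y w -> X (psi w) /\ phi (psi w) = w) ->
  (forall a b, X a -> X b -> adj H (phi a) (phi b) = adj G a b) ->
  (forall v, inball G k v -> X v) -> (forall w, inball H k w -> Y w) ->
  phi (groot G) = groot H -> biso k G H phi psi.
Proof.
move=> fX fY ad bX bY r.
have ad' : forall a b, Y a -> Y b -> adj G (psi a) (psi b) = adj H a b.
  move=> a b ya yb; have [xa ea] := fY _ ya; have [xb eb] := fY _ yb.
  by rewrite -ad // ea eb.
have r' : psi (groot H) = groot G.
  by rewrite -r; case: (fX _ (bX _ (inball_root G k))).
have t1 := transport_ball ad bX r; have t2 := transport_ball ad' bY r'.
split => //.
- by move=> v hv; split; [exact: t1 | case: (fX _ (bX _ hv))].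
- by move=> w hw; split; [exact: t2 | case: (fY _ (bY _ hw))].
- by move=> v w hv hw; apply: ad; apply: bX.
Qed.

Lemma biso_inball k G H phi psi j v : biso k G H phi psi -> (j <= k)%N ->
  inball G j v -> inball H j (phi v).
Proof.
case=> r f g a hj; exact: (transport_ball (X := inball G k) a (fun v h => h) r hj).
Qed.

Lemma ball_bounded (G : RGraph) k : locally_finite G ->
  exists N, forall v, inball G k v -> (v < N)%N.
Proof.
move=> lf.
have fin : forall N, exists M, forall v w, (v < N)%N -> adj G v w -> (w < M)%N.
  elim=> [|N [M HM]]; first by exists 0%N.
  have [n Hn] := lf N; exists (maxn M n) => v w; rewrite ltnS leq_eqVlt.
  case/orP=> [/eqP ->|hv] ha; rewrite leq_max.
    by rewrite (Hn _ ha) orbT.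
  by rewrite (HM _ _ hv ha).
elim: k => [|k [N HN]]; first by exists (groot G).+1 => v /= ->.
have [M HM] := fin N; exists (maxn N M) => v /= [h|[w [h a]]]; rewrite leq_max.
  by rewrite HN.
by rewrite (HM w) ?orbT // HN.
Qed.

Section FinSums.
Variable R : realType.

Definition flip (I : finType) (i0 : I) (w : {ffun I -> bool}) : {ffun I -> bool} :=
  [ffun i => if i == i0 then ~~ w i else w i].

Lemma flipK (I : finType) (i0 : I) : involutive (flip i0).
Proof.
move=> w; apply/ffunP => i; rewrite !ffunE.
by case: eqP => // ->; rewrite negbK.
Qed.

Definition Ssum (I : finType) (c : I -> bool -> R) (h : {ffun I -> bool} -> R) :=
  \sum_(w : {ffun I -> bool}) (\prod_i c i (w i)) * h w.

Lemma Ssum_split (I : finType) (c : I -> bool -> R) h i0 :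
  (forall w, h (flip i0 w) = h w) ->
  Ssum c h = (c i0 true + c i0 false) *
    \sum_(w : {ffun I -> bool} | w i0) (\prod_(i | i != i0) c i (w i)) * h w.
Proof.
move=> hf; rewrite /Ssum (bigID (fun w : {ffun I -> bool} => w i0)) /=.
rewrite [X in _ + X](reindex_inj (inv_inj (flipK i0))) /=.
rewrite [X in _ + X](eq_bigl (fun w : {ffun I -> bool} => w i0)); last first.
  by move=> w; rewrite ffunE eqxx negbK.
rewrite -big_split mulr_sumr /=; apply: eq_bigr => w wi0.
rewrite (bigD1 i0) //= (bigD1 i0 (P := predT)) //= hf ffunE eqxx wi0 /=.
have -> : \prod_(i | i != i0) c i (flip i0 w i) = \prod_(i | i != i0) c i (w i).
  by apply: eq_bigr => i /negbTE hi; rewrite ffunE hi.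
by rewrite -!mulrA -mulrDl.
Qed.

Lemma Ssum_marg (I : finType) (s : seq I) (c c' : I -> bool -> R) h :
  (forall i, i \notin s -> c i =1 c' i) ->
  (forall i, i \in s -> c i true + c i false = c' i true + c' i false) ->
  (forall i, i \in s -> forall w, h (flip i w) = h w) ->
  Ssum c h = Ssum c' h.
Proof.
elim: s c => [|a s IH] c ns ins fl.
  rewrite /Ssum; apply: eq_bigr => w _; congr (_ * _).
  by apply: eq_bigr => i _; apply: ns.
pose c'' := fun i => if i == a then c' i else c i.
have -> : Ssum c h = Ssum c'' h.
  rewrite (Ssum_split c (fl a (mem_head _ _))) (Ssum_split c'' (fl a (mem_head _ _))).
  rewrite /c'' eqxx ins ?mem_head //; congr (_ * _); apply: eq_bigr => w _.
  by congr (_ * _); apply: eq_bigr => i /negbTE ->.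
apply: IH.
- move=> i hi; rewrite /c''; case: eqP => // /eqP ia; apply: ns.
  by rewrite in_cons negb_or ia.
- move=> i hi; rewrite /c''; case: eqP => // _; apply: ins.
  by rewrite in_cons hi orbT.
- by move=> i hi; apply: fl; rewrite in_cons hi orbT.
Qed.

Definition supp (I : finType) (A : {set I}) (w : {ffun I -> bool}) :=
  [forall i, w i ==> (i \in A)].

Definition NF (I : finType) (f : bool -> R) (A : {set I}) (h : {ffun I -> bool} -> R) :=
  \sum_(w : {ffun I -> bool} | supp A w) (\prod_(i in A) f (w i)) * h w.

Lemma Ssum_NF (I : finType) (A : {set I}) (f : bool -> R) h :
  Ssum (fun i b => if i \in A then f b else (if b then 0 else 1)) h = NF f A h.
Proof.
rewrite /Ssum /NF [RHS]big_mkcond; apply: eq_bigr => w _.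
rewrite (bigID (fun i => i \in A)) /=.
rewrite (eq_bigr (fun i => f (w i))); last by move=> i ->.
case hs: (supp A w).
  rewrite [X in _ * X * _]big1 ?mulr1 // => i /negbTE hi; rewrite hi.
  by move/forallP: hs => /(_ i); rewrite hi implybF => /negbTE ->.
move/negbT: hs; rewrite negb_forall => /existsP[i]; rewrite negb_imply => /andP[wi hi].
by rewrite [X in _ * X * _](bigD1 i) //= (negbTE hi) wi mul0r mulr0 mul0r.
Qed.

Definition trf (I J : finType) (A : {set I}) (beta : I -> J) (w : {ffun I -> bool}) :
  {ffun J -> bool} := [ffun j => [exists i in A, (beta i == j) && w i]].

Lemma trf_beta (I J : finType) (A : {set I}) (beta : I -> J) w i :
  {in A &, injective beta} -> i \in A -> trf A beta w (beta i) = w i.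
Proof.
move=> binj hi; rewrite ffunE; apply/existsP/idP.
  by case=> i' /and3P[hi' /eqP /binj -> //].
by move=> wi; exists i; rewrite hi eqxx wi.
Qed.

Lemma NF_transfer (I J : finType) (f : bool -> R) (A : {set I}) (B : {set J})
  (beta : I -> J) hA hB :
  {in A &, injective beta} -> beta @: A = B ->
  (forall w, supp A w -> hA w = hB (trf A beta w)) ->
  NF f A hA = NF f B hB.
Proof.
move=> binj bim hAB.
have trfb : forall w, supp A w -> forall i, i \in A -> trf A beta w (beta i) = w i.
  move=> w _ i hi; rewrite ffunE; apply/existsP/idP.
    by case=> i' /and3P[hi' /eqP /binj -> //].
  by move=> wi; exists i; rewrite hi eqxx wi.
pose SA := [set w | supp A w]%SET; pose SB := [set w | supp B w]%SET.
have injt : {in SA &, injective (trf A beta)}.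
  move=> w1 w2; rewrite !inE => s1 s2 e; apply/ffunP => i.
  case hi: (i \in A); first by rewrite -(trfb _ s1 _ hi) -(trfb _ s2 _ hi) e.
  move/forallP: s1 => /(_ i); move/forallP: s2 => /(_ i); rewrite hi !implybF.
  by move=> /negbTE -> /negbTE ->.
have imt : trf A beta @: SA = SB.
  apply/setP => w'; rewrite !inE; apply/imsetP/idP.
    case=> w; rewrite inE => sw ->; apply/forallP => j; rewrite ffunE.
    apply/implyP => /existsP[i /and3P[hi /eqP <- _]].
    by rewrite -bim; apply: imset_f.
  move=> sw'; exists [ffun i => (i \in A) && w' (beta i)].
    by rewrite inE; apply/forallP => i; rewrite ffunE; apply/implyP => /andP[].
  apply/ffunP => j; rewrite ffunE; apply/idP/existsP.
    move=> wj; have : j \in B by move/forallP: sw' => /(_ j); rewrite wj.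
    move: wj; rewrite -bim => wj /imsetP[i hi ej]; exists i.
    by rewrite hi ej eqxx /= ffunE hi -ej.
  by case=> i /and3P[hi /eqP <-]; rewrite ffunE => /andP[].
rewrite /NF (eq_bigl (fun w => w \in SB)); last by move=> w; rewrite inE.
rewrite -imt big_imset //= [RHS]big_mkcond [LHS]big_mkcond /=.
apply: eq_bigr => w _; rewrite inE; case: ifP => // sw.
rewrite -hAB //; congr (_ * _).
rewrite -bim big_imset //=; apply: eq_bigr => i hi; by rewrite trfb.
Qed.

End FinSums.

Section Boxes.
Variable R : realType.
Variable p : R.

Definition cwb (b : bool) : R := if b then p else 1 - p.

Definition Aset (G : RGraph) (T : nat -> Prop) m : {set 'I_m * 'I_m} :=
  [set ij : 'I_m * 'I_m | [&& (ij.1 < ij.2)%N, G.1 ij.1 ij.2, `[< T ij.1 >] & `[< T ij.2 >]]]%SET.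

Definition ind (Q : RGraph -> Prop) (G : RGraph) m (w : {ffun 'I_m * 'I_m -> bool}) : R :=
  if `[< Q (perc G (ext_conf w)) >] then 1 else 0.

Definition locQ (G : RGraph) (Q : RGraph -> Prop) (T : nat -> Prop) :=
  forall x1 x2, (forall a b, T a -> T b -> adj G a b ->
      x1 (minn a b) (maxn a b) = x2 (minn a b) (maxn a b)) ->
    (Q (perc G x1) <-> Q (perc G x2)).

Lemma ext_confE m (w : {ffun 'I_m * 'I_m -> bool}) (i j : 'I_m) :
  ext_conf w i j = w (i, j).
Proof. by rewrite /ext_conf !valK. Qed.

Lemma ext_confN m (w : {ffun 'I_m * 'I_m -> bool}) a b :
  ~~ ((a < m) && (b < m))%N -> ext_conf w a b = false.
Proof.
rewrite negb_and /ext_conf => /orP[h|h]; first by rewrite insubN.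
by case: insub => // ?; rewrite insubN.
Qed.

Lemma box_NF (G : RGraph) (Q : RGraph -> Prop) (T : nat -> Prop) m :
  locQ G Q T -> box_prob p G Q m = NF cwb (Aset G T m) (ind Q G (m:=m)).
Proof.
move=> lq; rewrite -Ssum_NF.
rewrite /box_prob -/(Ssum (fun (ij : 'I_m * 'I_m) b => if ((ij.1 < ij.2)%N && G.1 ij.1 ij.2)
      then (if b then p else 1 - p) else (if b then 0 else 1)) (ind Q G (m:=m))).
apply: (Ssum_marg (s := enum [set ij : 'I_m * 'I_m | ~~ (`[< T ij.1 >] && `[< T ij.2 >])]%SET)).
- move=> ij; rewrite mem_enum inE negbK => /andP[t1 t2] b.
  by rewrite inE t1 t2 !andbT.
- move=> ij _; rewrite /cwb /=.
  by case: (_ && _); case: (_ \in _); rewrite /= ?add0r // addrC subrK.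
- move=> i0; rewrite mem_enum inE => hi0 w; rewrite /ind.
  suff -> : Q (perc G (ext_conf (flip i0 w))) = Q (perc G (ext_conf w)) by [].
  apply/propext; apply: lq => a b ta tb _.
  have [hab|hab] := boolP ((minn a b < m) && (maxn a b < m))%N; last first.
    by rewrite !ext_confN.
  case/andP: hab => ha hb.
  have -> : minn a b = nat_of_ord (Ordinal ha) by [].
  have -> : maxn a b = nat_of_ord (Ordinal hb) by [].
  rewrite !ext_confE ffunE; case: eqP => // e; move: hi0; rewrite -e /=.
  have tmin : T (minn a b) by rewrite /minn; case: ifP.
  have tmax : T (maxn a b) by rewrite /maxn; case: ifP.
  by move/asboolP: tmin => ->; move/asboolP: tmax => ->.
Qed.

Lemma box_ge0 (G : RGraph) Q m : 0 <= p <= 1 -> 0 <= box_prob p G Q m.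
Proof.
case/andP=> p0 p1; apply: sumr_ge0 => w _; apply: mulr_ge0.
  apply: prodr_ge0 => ij _; case: ifP => _; case: ifP => _ //; by rewrite subr_ge0.
by rewrite /ind; case: ifP.
Qed.

Lemma box_le1 (G : RGraph) Q m : 0 <= p <= 1 -> box_prob p G Q m <= 1.
Proof.
case/andP=> p0 p1.
have cw0 : forall (e b : bool), 0 <= (if e then (if b then p else 1 - p) else (if b then 0 else 1)).
  by move=> e b; case: e; case: b => //; rewrite subr_ge0.
apply: (@le_trans _ _ (\sum_(w : {ffun 'I_m * 'I_m -> bool}) conf_weight p G w)).
  apply: ler_sum => w _; rewrite -[X in _ <= X]mulr1; apply: ler_wpM2l.
    by apply: prodr_ge0.
  by case: ifP.
rewrite /conf_weight.
rewrite -(bigA_distr_bigA (fun (ij : 'I_m * 'I_m) (b : bool) =>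
   (if ((ij.1 < ij.2)%N && G.1 ij.1 ij.2) then (if b then p else 1 - p)
    else (if b then 0 else 1)))) /=.
rewrite big1 // => ij _; rewrite big_bool /=.
by case: (_ && _); rewrite /= ?add0r // addrC subrK.
Qed.

End Boxes.

Section Transfer.
Variable R : realType.
Variable p : R.

Lemma mm_min (f : nat -> nat) a b :
  minn (f (minn a b)) (f (maxn a b)) = minn (f a) (f b).
Proof.
by have [h|h] := leqP a b; lia.
Qed.

Lemma mm_max (f : nat -> nat) a b :
  maxn (f (minn a b)) (f (maxn a b)) = maxn (f a) (f b).
Proof.
by have [h|h] := leqP a b; lia.
Qed.

Lemma adj_lt (G : RGraph) a b : (a < b)%N -> adj G a b = G.1 a b.
Proof. move=> h; rewrite /adj.
have -> : minn a b = a by lia.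
have -> : maxn a b = b by lia.
by rewrite neq_ltn h. Qed.

Lemma adjE (G : RGraph) a b : adj G a b -> (a != b) /\ G.1 (minn a b) (maxn a b).
Proof. by case/andP. Qed.

Lemma inAset (G : RGraph) (T : nat -> Prop) m (ij : 'I_m * 'I_m) :
  reflect [/\ (ij.1 < ij.2)%N, G.1 ij.1 ij.2, T ij.1 & T ij.2] (ij \in Aset G T m).
Proof.
rewrite inE; apply: (iffP and4P) => [[h1 h2 /asboolP h3 /asboolP h4]|[h1 h2 h3 h4]] //.
by split => //; apply/asboolP.
Qed.

Lemma Tmin (T : nat -> Prop) a b : T a -> T b -> T (minn a b).
Proof. by rewrite /minn; case: ifP. Qed.
Lemma Tmax (T : nat -> Prop) a b : T a -> T b -> T (maxn a b).
Proof. by rewrite /maxn; case: ifP. Qed.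

Lemma box_transfer (G H : RGraph) (Q Q' : RGraph -> Prop) (T T' : nat -> Prop)
    m m' phi psi :
  (forall v, T v -> (v < m.+1)%N) -> (forall v, T' v -> (v < m'.+1)%N) ->
  (forall v, T v -> T' (phi v) /\ psi (phi v) = v) ->
  (forall w, T' w -> T (psi w) /\ phi (psi w) = w) ->
  (forall a b, T a -> T b -> adj H (phi a) (phi b) = adj G a b) ->
  locQ G Q T -> locQ H Q' T' ->
  (forall x y, (forall a b, T a -> T b -> adj G a b ->
       x (minn a b) (maxn a b) = y (minn (phi a) (phi b)) (maxn (phi a) (phi b))) ->
     (Q (perc G x) <-> Q' (perc H y))) ->
  box_prob p G Q m.+1 = box_prob p H Q' m'.+1.
Proof.
move=> bT bT' fT fT' ad lq lq' corr.
rewrite (@box_NF R p G Q T m.+1 lq) (@box_NF R p H Q' T' m'.+1 lq').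
pose beta := fun ij : 'I_m.+1 * 'I_m.+1 =>
  ((inord (minn (phi ij.1) (phi ij.2)) : 'I_m'.+1),
   (inord (maxn (phi ij.1) (phi ij.2)) : 'I_m'.+1)).
have bv : forall a b, T a -> T b ->
    ((inord (minn (phi a) (phi b)) : 'I_m'.+1) = minn (phi a) (phi b) :> nat) /\
    ((inord (maxn (phi a) (phi b)) : 'I_m'.+1) = maxn (phi a) (phi b) :> nat).
  move=> a b ta tb; have [t1 _] := fT _ ta; have [t2 _] := fT _ tb.
  have := bT' _ t1; have := bT' _ t2 => h1 h2.
  by rewrite !inordK //; lia.
have bvv : forall a b, T a -> T b ->
    ((inord (minn a b) : 'I_m.+1) = minn a b :> nat) /\
    ((inord (maxn a b) : 'I_m.+1) = maxn a b :> nat).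
  move=> a b ta tb; have := bT _ ta; have := bT _ tb => h1 h2.
  by rewrite !inordK //; lia.
have binj : {in Aset G T m.+1 &, injective beta}.
  move=> [i1 i2] [j1 j2] /inAset[/= l1 _ ti1 ti2] /inAset[/= l2 _ tj1 tj2] e.
  have [ea eb] := bv _ _ ti1 ti2; have [ec ed] := bv _ _ tj1 tj2.
  have e1 : minn (phi i1) (phi i2) = minn (phi j1) (phi j2).
    by rewrite -ea -ec; case: e => -> _.
  have e2 : maxn (phi i1) (phi i2) = maxn (phi j1) (phi j2).
    by rewrite -eb -ed; case: e => _ ->.
  have [[f1 f2]|[f1 f2]] : (phi i1 = phi j1 /\ phi i2 = phi j2) \/
                           (phi i1 = phi j2 /\ phi i2 = phi j1) by lia.
    have g1 : i1 = j1 :> nat.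
      by rewrite -(proj2 (fT _ ti1)) -(proj2 (fT _ tj1)) f1.
    have g2 : i2 = j2 :> nat.
      by rewrite -(proj2 (fT _ ti2)) -(proj2 (fT _ tj2)) f2.
    by congr pair; apply: val_inj.
  have g1 : i1 = j2 :> nat.
    by rewrite -(proj2 (fT _ ti1)) -(proj2 (fT _ tj2)) f1.
  have g2 : i2 = j1 :> nat.
    by rewrite -(proj2 (fT _ ti2)) -(proj2 (fT _ tj1)) f2.
  lia.
have bim : beta @: Aset G T m.+1 = Aset H T' m'.+1.
  apply/setP => j; apply/imsetP/idP.
    case=> -[i1 i2] /inAset[/= l g ti1 ti2] ->; apply/inAset.
    have [ea eb] := bv _ _ ti1 ti2; rewrite /= ea eb.
    have [t1 r1] := fT _ ti1; have [t2 r2] := fT _ ti2.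
    have ne : phi i1 != phi i2.
      apply/eqP => e; move: l; rewrite -r1 -r2 e; lia.
    have aH : adj H (phi i1) (phi i2) by rewrite ad // adj_lt.
    split; first lia.
    - by case/adjE: aH.
    - exact: Tmin.
    - exact: Tmax.
  case: j => [j1 j2] /inAset[/= l g tj1 tj2].
  have [s1 r1] := fT' _ tj1; have [s2 r2] := fT' _ tj2.
  have aG : adj G (psi j1) (psi j2).
    by rewrite -ad // r1 r2 adj_lt.
  have [ea eb] := bvv _ _ s1 s2.
  exists ((inord (minn (psi j1) (psi j2)), inord (maxn (psi j1) (psi j2)))).
    apply/inAset; rewrite /= ea eb; case/adjE: aG => ne gg; split => //.
    - by move: ne; rewrite neq_ltn; lia.
    - exact: Tmin.
    - exact: Tmax.
  have t1 := Tmin s1 s2; have t2 := Tmax s1 s2.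
  have [ec ed] := bv _ _ t1 t2.
  congr pair; apply: val_inj; rewrite /= ?ea ?eb.
    by rewrite ec mm_min r1 r2; lia.
  by rewrite ed mm_max r1 r2; lia.
apply: (@NF_transfer R _ _ (cwb p) _ _ beta _ _ binj bim) => w sw; rewrite /ind.
suff -> : Q (perc G (ext_conf w)) = Q' (perc H (ext_conf (trf (Aset G T m.+1) beta w))) by [].
apply/propext; apply: corr => a b ta tb hab.
have [ea eb] := bvv _ _ ta tb.
pose i : 'I_m.+1 * 'I_m.+1 := (inord (minn a b), inord (maxn a b)).
have hi : i \in Aset G T m.+1.
  apply/inAset; rewrite /= ea eb; case/adjE: hab => ne gg; split => //.
  - by move: ne; rewrite neq_ltn; lia.
  - exact: Tmin.
  - exact: Tmax.
have [ec ed] := bv _ _ (Tmin ta tb) (Tmax ta tb).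
have -> : minn a b = i.1 by rewrite /= ea.
have -> : maxn a b = i.2 by rewrite /= eb.
have -> : minn (phi a) (phi b) = (beta i).1.
  by rewrite /= ea eb ec mm_min.
have -> : maxn (phi a) (phi b) = (beta i).2.
  by rewrite /= ea eb ed mm_max.
by rewrite !ext_confE -surjective_pairing trf_beta // -surjective_pairing.
Qed.

End Transfer.

Section Events.
Variable R : realType.
Variable E : RGraph -> Prop.
Variable R0 : nat.
Hypothesis HE : forall G H, ball_iso R0 G H -> (E G <-> E H).

Definition Qa (r : nat) (G : RGraph) : RGraph -> Prop :=
  fun Gp => exists u, inball G r u /\ E (reroot Gp u).

Lemma corrQ_dir r K G H phi psi (x y : nat -> nat -> bool) :
  (r + R0 <= K)%N -> biso K G H phi psi ->
  (forall a b, inball G K a -> inball G K b -> adj G a b ->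
     x (minn a b) (maxn a b) = y (minn (phi a) (phi b)) (maxn (phi a) (phi b))) ->
  Qa r G (perc G x) -> Qa r H (perc H y).
Proof.
move=> hK bi ag [u [hu he]]; exists (phi u); split.
  by apply: (biso_inball bi) => //; lia.
have bi' := bi; case: bi' => r0 f g a.
apply: (HE _).1 he; exists phi, psi.
apply: (transport_biso (X := inball G K) (Y := inball H K)) => //.
- move=> v w hv hw; rewrite !adj_reroot !perc_adj a //.
  by case hvw: (adj G v w) => //=; rewrite ag.
- move=> v hv; apply: (inball_mono hK); apply: (inball_trans hu).
  apply: (inball_sub (G := reroot (perc G x) u)) => // c d; exact: perc_sub.
- have hu' : inball H r (phi u) by apply: (biso_inball bi) => //; lia.
  move=> v hv; apply: (inball_mono hK); apply: (inball_trans hu').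
  apply: (inball_sub (G := reroot (perc H y) (phi u))) => // c d; exact: perc_sub.
Qed.

Lemma corrQ r K G H phi psi (x y : nat -> nat -> bool) :
  (r + R0 <= K)%N -> biso K G H phi psi ->
  (forall a b, inball G K a -> inball G K b -> adj G a b ->
     x (minn a b) (maxn a b) = y (minn (phi a) (phi b)) (maxn (phi a) (phi b))) ->
  (Qa r G (perc G x) <-> Qa r H (perc H y)).
Proof.
move=> hK bi ag; split; first exact: corrQ_dir hK bi ag.
apply: (corrQ_dir hK (biso_sym bi)) => a b ha hb hab.
have bi' := bi; case: bi' => r0 f g ad.
have [ga ea] := g _ ha; have [gb eb] := g _ hb.
by rewrite ag // -?ad ?ea ?eb.
Qed.

Lemma locQa r K G : (r + R0 <= K)%N -> locQ G (Qa r G) (inball G K).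
Proof.
move=> hK x1 x2 ag; exact: (corrQ hK (biso_refl K G)).
Qed.

Variable p : R.

Lemma box_stab r K G N m : (r + R0 <= K)%N ->
  (forall v, inball G K v -> (v < N.+1)%N) -> (N <= m)%N ->
  box_prob p G (Qa r G) m.+1 = box_prob p G (Qa r G) N.+1.
Proof.
move=> hK bN hm.
apply: (@box_transfer R p G G _ _ (inball G K) (inball G K) m N id id) => //.
- by move=> v hv; apply: (leq_trans (bN _ hv)).
- exact: locQa.
- exact: locQa.
- by move=> x y ag; apply: (corrQ hK (biso_refl K G)).
Qed.

Lemma perc_prob_box r K G N : (r + R0 <= K)%N ->
  (forall v, inball G K v -> (v < N.+1)%N) ->
  perc_prob p G (Qa r G) = box_prob p G (Qa r G) N.+1.
Proof.
move=> hK bN; rewrite /perc_prob; apply: cvg_lim => //.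
apply: cvg_near_cst; near=> m.
have hm : (N.+1 <= m)%N by near: m; exists N.+1.
have -> : m = m.-1.+1 by lia.
apply: (box_stab hK bN); lia.
Unshelve. all: by end_near.
Qed.

Lemma box_iso r K G H phi psi N : (r + R0 <= K)%N -> biso K G H phi psi ->
  (forall v, inball G K v -> (v < N.+1)%N) ->
  (forall v, inball H K v -> (v < N.+1)%N) ->
  box_prob p G (Qa r G) N.+1 = box_prob p H (Qa r H) N.+1.
Proof.
move=> hK bi bG bH; have bi' := bi; case: bi' => r0 f g a.
apply: (@box_transfer R p G H _ _ (inball G K) (inball H K) N N phi psi) => //.
- exact: locQa.
- exact: locQa.
- by move=> x y ag; apply: (corrQ hK bi).
Qed.

End Events.

Section Finite.
Variable R : realType.
Variable E : RGraph -> Prop.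
Variable R0 : nat.
Hypothesis HE : forall G H, ball_iso R0 G H -> (E G <-> E H).
Variable p : R.
Hypothesis hp : 0 <= p <= 1.
Variable r : nat.

Lemma fin_adj e n v a b : adj (fin_rgraph e n v) a b -> (a < n)%N /\ (b < n)%N.
Proof. by case/andP=> ne /and3P[h1 h2 _]; split; lia. Qed.

Lemma fin_ball e n v k u : (v < n)%N -> inball (fin_rgraph e n v) k u -> (u < n)%N.
Proof.
move=> hv; elim: k u => [|k IH] u /=; first by move=> ->.
by case=> [/IH //|[w [_ /fin_adj[]]]].
Qed.

Lemma fin_lf e n v : locally_finite (fin_rgraph e n v).
Proof. by move=> a; exists n => w /fin_adj[]. Qed.

Definition ib (G : RGraph) k u : R := if `[< inball G k u >] then 1 else 0.

Lemma box_E_Qa0 (G : RGraph) m : box_prob p G E m = box_prob p G (Qa E 0 G) m.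
Proof.
rewrite /box_prob; apply: eq_bigr => w _; congr (_ * _).
suff -> : E (perc G (ext_conf w)) = Qa E 0 G (perc G (ext_conf w)) by [].
apply/propext; split; first by move=> h; exists (groot G); split.
by case=> u [/= -> h].
Qed.

Lemma perc_E_Qa0 (G : RGraph) : perc_prob p G E = perc_prob p G (Qa E 0 G).
Proof.
rewrite /perc_prob (_ : box_prob p G E = box_prob p G (Qa E 0 G)) //.
by apply: funext => m; exact: box_E_Qa0.
Qed.

Lemma union_bound e n v : (v < n)%N ->
  box_prob p (fin_rgraph e n v) (Qa E r (fin_rgraph e n v)) n <=
  \sum_(u < n) ib (fin_rgraph e n v) r u * box_prob p (fin_rgraph e n u) E n.
Proof.
move=> hv; case/andP: hp => p0 p1.
have cw0 : forall w : {ffun 'I_n * 'I_n -> bool}, 0 <= conf_weight p (fin_rgraph e n v) w.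
  move=> w; apply: prodr_ge0 => ij _.
  by case: (_ && _); case: (w ij); rewrite // subr_ge0.
rewrite /box_prob.
under [in X in _ <= X]eq_bigr do rewrite mulr_sumr.
rewrite exchange_big /=; apply: ler_sum => w _.
under eq_bigr do rewrite mulrCA.
have ecw : forall i, conf_weight p (fin_rgraph e n i) w = conf_weight p (fin_rgraph e n v) w by [].
under eq_bigr do rewrite ecw.
rewrite -mulr_sumr; apply: ler_wpM2l; first exact: cw0.
case: ifP => [/asboolP [u [hu he]]|_]; last first.
  by apply: sumr_ge0 => u _; apply: mulr_ge0; rewrite /ib; case: ifP.
have un := fin_ball hv hu.
rewrite (bigD1 (Ordinal un)) //= /ib.
have -> : `[< inball (fin_rgraph e n v) r u >] = true by apply/asboolP.
have -> : `[< E (perc (fin_rgraph e n u) (ext_conf w)) >] = true by apply/asboolP.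
rewrite mul1r lerDl; apply: sumr_ge0 => i _; apply: mulr_ge0; case: ifP => //.
Qed.

Definition Sball (D : nat) (G : RGraph) : Prop :=
  exists s : seq nat, [/\ uniq s, (D < size s)%N & forall x, x \in s -> inball G (r + r) x].

Definition fe D (G : RGraph) : R := if `[< Sball D G >] then 1 else 0.

Lemma count_bound e n D u :
  \sum_(v < n) (1 - fe D (fin_rgraph e n v)) * ib (fin_rgraph e n v) r u <= D%:R.
Proof.
pose X := [set v : 'I_n | ~~ `[< Sball D (fin_rgraph e n v) >] &&
                          `[< inball (fin_rgraph e n v) r u >]]%SET.
have -> : \sum_(v < n) (1 - fe D (fin_rgraph e n v)) * ib (fin_rgraph e n v) r u
          = \sum_(v in X) (1 : R).
  rewrite [RHS]big_mkcond; apply: eq_bigr => v _; rewrite inE /fe /ib.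
  by case: `[< Sball _ _ >]; case: `[< inball _ _ _ >]; rewrite ?subrr ?subr0 ?mul0r ?mulr0 ?mulr1.
rewrite sumr_const ler_nat.
case: (set_0Vmem X) => [->|[v0 hv0]]; first by rewrite cards0.
rewrite leqNgt; apply/negP => hD.
move: (hv0); rewrite inE => /andP[/negP nS /asboolP h0]; apply: nS; apply/asboolP.
exists (map val (enum X)); split.
- by rewrite map_inj_uniq ?enum_uniq //; exact: val_inj.
- by rewrite size_map -cardE.
- move=> x /mapP[v]; rewrite mem_enum inE => /andP[_ /asboolP hv] ->.
  apply: (inball_trans (u := u)) => //.
  exact: (inball_sym (G := fin_rgraph e n v)).
Qed.

End Finite.

Section Meas.

Lemma meas_cyl i j (b : bool) : measurable ([set G : RGraphM | G.1 i j = b]).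
Proof. by apply: sub_sigma_algebra; left; exists i, j, b. Qed.

Lemma meas_root k : measurable ([set G : RGraphM | G.2 = k]).
Proof. by apply: sub_sigma_algebra; right; exists k. Qed.

Lemma meas_adj a b : measurable ([set G : RGraphM | adj G a b]).
Proof.
case: (eqVneq a b) => [->|ne].
  rewrite (_ : [set G : RGraphM | adj G b b] = set0); first exact: measurable0.
  by apply/seteqP; split => G //=; rewrite /adj eqxx.
rewrite (_ : [set G : RGraphM | adj G a b] = [set G : RGraphM | G.1 (minn a b) (maxn a b) = true]).
  exact: meas_cyl.
by apply/seteqP; split => G /=; rewrite /adj ne.
Qed.

Lemma meas_inball k v : measurable ([set G : RGraphM | inball G k v]).
Proof.
elim: k v => [|k IH] v /=.
  rewrite (_ : [set G : RGraphM | v = groot G] = [set G : RGraphM | G.2 = v]).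
    exact: meas_root.
  by apply/seteqP; split => G /= h; rewrite /groot in h *; rewrite h.
rewrite (_ : [set G : RGraphM | inball G k v \/ (exists w, inball G k w /\ adj G w v)] =
   [set G : RGraphM | inball G k v] `|`
   \bigcup_w ([set G : RGraphM | inball G k w] `&` [set G : RGraphM | adj G w v])).
  apply: measurableU => //; apply: bigcupT_measurable => w.
  by apply: measurableI => //; exact: meas_adj.
apply/seteqP; split => G /=.
  by case=> [h|[w [h1 h2]]]; [left|right; exists w].
by case=> [h|[w _ [h1 h2]]]; [left|right; exists w].
Qed.

Lemma meas_all (P : RGraph -> nat -> Prop) (s : seq nat) :
  (forall x, measurable ([set G : RGraphM | P G x])) ->
  measurable ([set G : RGraphM | forall x, x \in s -> P G x]).
Proof.
move=> mP; elim: s => [|a s IH].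
  rewrite (_ : [set G : RGraphM | forall x, x \in [::] -> P G x] = setT).
    exact: measurableT.
  by apply/seteqP; split => G //=.
rewrite (_ : [set G : RGraphM | forall x, x \in a :: s -> P G x] =
    [set G : RGraphM | P G a] `&` [set G : RGraphM | forall x, x \in s -> P G x]).
  exact: measurableI.
apply/seteqP; split => G /=.
  by move=> h; split => [|x xs]; apply: h; rewrite in_cons ?eqxx ?xs ?orbT.
by case=> h1 h2 x; rewrite in_cons => /orP[/eqP ->|/h2].
Qed.

Lemma meas_Sball r D : measurable (Sball r D : set RGraphM).
Proof.
pose F := fun k : nat => match unpickle k with
  | Some s => if uniq s && (D < size s)%N
              then [set G : RGraphM | forall x, x \in s -> inball G (r + r) x]
              else set0
  | None => set0 end.
rewrite (_ : Sball r D = \bigcup_k F k).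
  apply: bigcupT_measurable => k; rewrite /F.
  case: (unpickle k) => [s|]; last exact: measurable0.
  case: ifP => _; last exact: measurable0.
  by apply: meas_all => x; exact: meas_inball.
apply/seteqP; split => G /=.
  case=> s [us ss hs]; exists (pickle s) => //; rewrite /F pickleK us ss.
  exact: hs.
case=> k _; rewrite /F; case: (unpickle k) => [s|] //.
by case: ifP => // /andP[us ss] hs; exists s.
Qed.

Lemma meas_LF : measurable ([set G : RGraphM | locally_finite G]).
Proof.
rewrite (_ : [set G : RGraphM | locally_finite G] =
  \bigcap_v \bigcup_n \bigcap_w
     (if (w < n)%N then setT else ~` [set G : RGraphM | adj G v w])).
  apply: bigcapT_measurable => v; apply: bigcupT_measurable => n.
  apply: bigcapT_measurable => w; case: ifP => _; first exact: measurableT.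
  by apply: measurableC; exact: meas_adj.
apply/seteqP; split => G /=.
  move=> lf v _; have [n hn] := lf v; exists n => // w _.
  case: ifP => // hw /= ha; by move: (hn _ ha); rewrite hw.
move=> h v; have [n _ hn] := h v I; exists n => w ha.
by move: (hn w I); case: ifP => // _ /=; apply.
Qed.

End Meas.

Section Assembly.
Variable R : realType.

Lemma lim01 (u : nat -> R) : (forall m, 0 <= u m <= 1) -> 0 <= lim (u @ \oo) <= 1.
Proof.
move=> h; have [c|nc] := pselect (cvg (u @ \oo)).
  apply/andP; split.
    by apply: limr_ge => //; near=> m; case/andP: (h m).
  by apply: limr_le => //; near=> m; case/andP: (h m).
have -> : lim (u @ \oo) = 0.
  rewrite /lim /lim_in xgetPN // => l hl; apply: nc; exact: cvgP hl.
by rewrite lexx ler01.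
Unshelve. all: by end_near.
Qed.

Lemma perc01 (p : R) G Q : 0 <= p <= 1 -> 0 <= perc_prob p G Q <= 1.
Proof.
move=> hp; apply: lim01 => m; apply/andP; split; [exact: box_ge0 | exact: box_le1].
Qed.

Lemma int01 (mu : probability RGraphM R) (f : RGraph -> R) :
  (forall x, 0 <= f x <= 1) ->
  (\int[mu]_x (f x)%:E)%E = (Rintegral mu setT f)%:E.
Proof.
move=> h; rewrite /Rintegral fineK //.
have i0 : (0 <= \int[mu]_x (f x)%:E)%E.
  by apply: integral_ge0 => x _; rewrite lee_fin; case/andP: (h x).
have i1 : (\int[mu]_x (f x)%:E <= 1)%E.
  have -> : (1 = \int[mu]_x (cst 1%:E) x)%E.
    by rewrite integral_cst // mul1e; exact/esym/(probability_setT mu).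
  rewrite !ge0_integralTE //; last by move=> x; rewrite lee_fin; case/andP: (h x).
  apply: le_ereal_sup => _ [g hg <-]; exists g => // x.
  by apply: le_trans (hg x) _; rewrite lee_fin; case/andP: (h x).
by rewrite ge0_fin_numE // (le_lt_trans i1) // ltry.
Qed.

End Assembly.

Section ChooseD.
Variable R : realType.

Lemma Sball_dec r D D' G : (D <= D')%N -> Sball r D' G -> Sball r D G.
Proof. by move=> h [s [us ss hs]]; exists s; split => //; apply: leq_ltn_trans ss. Qed.

Lemma Sball_LF r G : locally_finite G -> exists D, ~ Sball r D G.
Proof.
move=> lf; have [N hN] := ball_bounded (r + r) lf; exists N => -[s [us ss hs]].
have : (size s <= size (iota 0 N))%N.
  apply: uniq_leq_size => // x /hs /hN hx; by rewrite mem_iota.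
by rewrite size_iota; lia.
Qed.

Lemma choose_D (mu : probability RGraphM R) r :
  mu [set G : RGraphM | locally_finite G] = 1%E ->
  forall delta : R, 0 < delta -> exists D, (mu (Sball r D : set RGraphM) <= delta%:E)%E.
Proof.
move=> hLF delta d0.
have mS := meas_Sball r.
have mcap : measurable (\bigcap_D (Sball r D : set RGraphM)).
  by apply: bigcapT_measurable.
have cap0 : mu (\bigcap_D (Sball r D : set RGraphM)) = 0%E.
  apply/eqP; rewrite eq_le measure_ge0 andbT.
  have : (mu (~` [set G : RGraphM | locally_finite G]) = 0)%E.
    rewrite probability_setC; last exact: meas_LF.
    rewrite (_ : mu [set G : RGraphM | locally_finite G] = 1%E); first by rewrite subee.
    exact: hLF.
  move=> <-; apply: le_measure; rewrite ?inE //; first exact: measurableC meas_LF.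
  move=> G hG /= lf; have [D hD] := @Sball_LF r G lf; apply: hD; exact: hG.
have cv := @nonincreasing_cvg_mu _ _ _ mu (fun D => (Sball r D : set RGraphM)).
have := cv (le_lt_trans (probability_le1 mu (mS 0%N)) (ltry 1)) mS mcap.
have ni : {homo (fun D => (Sball r D : set RGraphM)) : n m / (n <= m)%N >-> (m <= n)%O}.
  by move=> a b ab; rewrite subsetEset => G; apply: Sball_dec.
move=> /(_ ni); rewrite [X in _ --> X](_ : _ = 0%E); last exact: cap0.
move=> /fine_cvgP[fin /cvgrPdist_lt /(_ _ d0) cl].
have [N _ HN] := filterI fin cl.
have := HN N (leqnn N); move=> [/= fn ht].
exists N; rewrite -(fineK fn) lee_fin; move: ht; rewrite sub0r normrN.
by move=> /ltW; apply: le_trans; apply: ler_norm.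
Qed.

End ChooseD.

Section Final.
Variable R : realType.
Variable E : RGraph -> Prop.
Variable R0 : nat.
Hypothesis HE : forall G H, ball_iso R0 G H -> (E G <-> E H).
Variable p : R.
Hypothesis hp : 0 <= p <= 1.

Lemma blc_fa r : bounded_local_continuous (fun G => perc_prob p G (Qa E r G)).
Proof.
split.
  exists 1 => G _; have /andP[h0 h1] := @perc01 R p G (Qa E r G) hp.
  by rewrite ger0_norm.
move=> G lfG eps eps0; exists (r + R0) => H lfH [phi [psi bi]].
have [N1 h1] := ball_bounded (r + R0) lfG; have [N2 h2] := ball_bounded (r + R0) lfH.
have b1 : forall v, inball G (r + R0) v -> (v < (maxn N1 N2).+1)%N.
  by move=> v /h1; lia.
have b2 : forall v, inball H (r + R0) v -> (v < (maxn N1 N2).+1)%N.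
  by move=> v /h2; lia.
rewrite (perc_prob_box HE p (leqnn _) b1) (perc_prob_box HE p (leqnn _) b2).
by rewrite (box_iso HE p (leqnn _) bi b1 b2) subrr normr0.
Qed.

Lemma blc_fb : bounded_local_continuous (fun G => perc_prob p G E).
Proof.
rewrite (_ : (fun G => perc_prob p G E) = (fun G => perc_prob p G (Qa E 0 G))).
  exact: blc_fa.
by apply: funext => G; rewrite perc_E_Qa0.
Qed.

Lemma Sball_iso r D G H phi psi : biso (r + r) G H phi psi -> Sball r D G -> Sball r D H.
Proof.
case=> r0 f g a [s [us ss hs]]; exists (map phi s); split.
- rewrite map_inj_in_uniq // => x y /hs hx /hs hy e.
  by rewrite -(proj2 (f _ hx)) -(proj2 (f _ hy)) e.
- by rewrite size_map.
- by move=> x /mapP[y /hs hy ->]; case: (f _ hy).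
Qed.

Lemma blc_fe r D : bounded_local_continuous (fe R r D).
Proof.
split.
  by exists 1 => G _; rewrite /fe; case: ifP; rewrite ?normr1 ?normr0.
move=> G _ eps eps0; exists (r + r) => H _ [phi [psi bi]].
suff -> : fe R r D H = fe R r D G by rewrite subrr normr0.
rewrite /fe; congr (if _ then _ else _); apply/asboolP/asboolP.
  exact: Sball_iso (biso_sym bi).
exact: Sball_iso bi.
Qed.

Lemma fin_ineq r e n D :
  \sum_(v < n) perc_prob p (fin_rgraph e n v) (Qa E r (fin_rgraph e n v)) <=
  \sum_(v < n) fe R r D (fin_rgraph e n v) +
  D%:R * \sum_(u < n) perc_prob p (fin_rgraph e n u) E.
Proof.
case: n => [|n]; first by rewrite !big_ord0 mulr0 addr0.
have bb : forall (v : 'I_n.+1) k u, inball (fin_rgraph e n.+1 v) k u -> (u < n.+1)%N.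
  by move=> v k u h; exact: (fin_ball hp (ltn_ord v) h).
have fbE : forall u : 'I_n.+1, perc_prob p (fin_rgraph e n.+1 u) E =
                               box_prob p (fin_rgraph e n.+1 u) E n.+1.
  move=> u; rewrite perc_E_Qa0 box_E_Qa0.
  by apply: (perc_prob_box HE p (K := R0) (N := n)) => // w; apply: bb.
have step : forall v : 'I_n.+1,
   perc_prob p (fin_rgraph e n.+1 v) (Qa E r (fin_rgraph e n.+1 v)) <=
   fe R r D (fin_rgraph e n.+1 v) + (1 - fe R r D (fin_rgraph e n.+1 v)) *
   \sum_(u < n.+1) ib R (fin_rgraph e n.+1 v) r u * perc_prob p (fin_rgraph e n.+1 u) E.
  move=> v; rewrite (perc_prob_box HE p (K := r + R0) (N := n)) //; last by move=> w; apply: bb.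
  rewrite /fe; case: ifP => _.
    by rewrite subrr mul0r addr0; apply: box_le1.
  rewrite subr0 mul1r add0r; under eq_bigr do rewrite fbE.
  exact: union_bound.
apply: (le_trans (ler_sum _ (fun v _ => step v))).
rewrite big_split /= lerD2l.
under eq_bigr do rewrite mulr_sumr.
rewrite exchange_big /= mulr_sumr; apply: ler_sum => u _.
rewrite (eq_bigr (fun v : 'I_n.+1 => perc_prob p (fin_rgraph e n.+1 u) E *
      ((1 - fe R r D (fin_rgraph e n.+1 v)) * ib R (fin_rgraph e n.+1 v) r u))); last first.
  by move=> v _; rewrite mulrA mulrC mulrA.
rewrite -mulr_sumr mulrC; apply: ler_wpM2r.
  by case/andP: (@perc01 R p (fin_rgraph e n.+1 u) E hp).
exact: count_bound.
Qed.

End Final.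

Unset Implicit Arguments.

Theorem mainTheorem15 (R : realType) (Gs : nat -> nat -> nat -> bool)
    (mu : probability RGraphM R) (E : RGraph -> Prop) :
  local_limit Gs mu -> local_event E ->
  forall delta : R, 0 < delta -> forall r : nat,
  exists D : nat, forall p : R, 0 <= p <= 1 ->
    (\int[mu]_G (perc_prob p G
        (fun Gp => exists u, inball G r u /\ E (reroot Gp u)))%:E
     <= D%:R%:E * \int[mu]_G (perc_prob p G E)%:E + delta%:E)%E.
Proof.
move=> [hLF hconv] [R0 HE] delta d0 r.
have [D hD] := @choose_D R mu r hLF delta d0.
exists D => p hp.
have ca := hconv _ (@blc_fa R E R0 HE p hp r).
have cb := hconv _ (@blc_fb R E R0 HE p hp).
have cc := hconv _ (blc_fe R r D).
have ineq := ler_cvg_to ca (cvgD cc (cvgMl_tmp (a := D%:R) cb)).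
have lim_ineq : Rintegral mu setT (fun G => perc_prob p G (Qa E r G)) <=
   Rintegral mu setT (fe R r D) + D%:R * Rintegral mu setT (fun G => perc_prob p G E).
  apply: ineq; near=> n.
  rewrite !fctE /= mulrCA -mulrDr; apply: ler_wpM2l; first by rewrite invr_ge0.
  exact: (@fin_ineq R E R0 HE p hp r (Gs n) n D).
rewrite (@int01 R mu (fun G => perc_prob p G (Qa E r G))); last by move=> x; apply: (@perc01 R p).
rewrite (@int01 R mu (fun G => perc_prob p G E)); last by move=> x; apply: (@perc01 R p).
have feI : (Rintegral mu setT (fe R r D))%:E = mu (Sball r D : set RGraphM).
  rewrite -(@int01 R mu); last by move=> x; rewrite /fe; case: ifP; rewrite ?lexx ?ler01.
  rewrite (eq_integral (fun x => (\1_(Sball r D : set RGraphM) x)%:E)).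
    by rewrite integral_indic ?setIT //; exact: meas_Sball.
  move=> x _; rewrite indicE /fe; have [h|h] := pselect (Sball r D x).
    by rewrite mem_set // asboolT.
  by rewrite memNset // asboolF.
have hC : Rintegral mu setT (fe R r D) <= delta by rewrite -lee_fin feI.
rewrite -EFinM -EFinD lee_fin.
apply: (le_trans lim_ineq); rewrite addrC lerD2l //.
Unshelve. all: by end_near.
Qed.
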